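(* Let $x_1 \geq x_2 \geq \dots \geq x_m$ be the side lengths of a finite set of squares with $x_1 < \frac{1}{2}$. If the total area $\sum_i x_i^2$ is at most $\frac{1}{2} + 2\left(x_1 - \frac{1}{2}\right)^2$, then \textsc{Shelf Packing} packs all of these squares into a unit square.
   Context: \textsc{Shelf Packing} (of Moon and Moser) into an axis-parallel rectangular container processes the squares in order of non-increasing side length and places them axis-parallel. The container is filled by horizontal ''shelves'' stacked from the bottom upward. A shelf is opened by the first square placed in it, whose side length determines the shelf's height; the shelf's bottom is the top of the previous shelf (or the container's bottom for the first shelf). Subsequent squares are placed next to each other along the bottom of the current shelf, from left to right. When the next square no longer fits into the remaining width of the current shelf, a new shelf is opened on top of the current one, starting with that square. \textsc{Shelf Packing} succeeds if all squares are placed inside the container, and fails if some square would have to be placed in a shelf exceeding the container's height. *)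

(* Defs.v *)
From mathcomp Require Import all_boot all_order all_algebra.
Set Implicit Arguments. Unset Strict Implicit. Unset Printing Implicit Defensive.
Import Order.TTheory GRing.Theory Num.Theory.
Local Open Scope ring_scope.

Section Shelf.
Variable R : realFieldType.

(* State: yb = bottom of the current shelf, h = height of the current shelf
   (side of the square that opened it), u = width already used in it.
   Returns the lower-left corners of the placed squares, in order. *)
Fixpoint shelf_aux (W yb h u : R) (s : seq R) : seq (R * R) :=
  match s with
  | [::] => [::]
  | x :: s' =>
      if u + x <= W then (u, yb) :: shelf_aux W yb h (u + x) s'
      else (0, yb + h) :: shelf_aux W (yb + h) x x s'
  end.

Definition shelf_positions (W : R) (s : seq R) : seq (R * R) :=
  match s with
  | [::] => [::]
  | x :: s' => (0, 0) :: shelf_aux W 0 x x s'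
  end.

Definition shelf_packing_succeeds (W H : R) (s : seq R) : bool :=
  all (fun pq => let: (p, x) := pq in
                 [&& 0 <= p.1, p.1 + x <= W, 0 <= p.2 & p.2 + x <= H])
      (zip (shelf_positions W s) s).

End Shelf.

(* Main.v *)
Require Import Defs.
From mathcomp Require Import all_boot all_order all_algebra.
From mathcomp Require Import lra.
Import Order.TTheory GRing.Theory Num.Theory.
Local Open Scope ring_scope.

Lemma aux (R : realFieldType) (x1 : R) (s : seq R) : forall yb h u A m : R,
  0 <= yb -> 0 < h -> h <= x1 -> x1 < 1/2 -> h <= u -> u <= 1 ->
  0 < m -> m <= h ->
  path (>=%R) m s -> all (fun x => 0 < x) s ->
  (yb + h - x1) * (1 - x1) + x1 ^+ 2 + m * (u - h) <= A ->
  A + \sum_(y <- s) y ^+ 2 <= 1 / 2 + 2 * (x1 - 1 / 2) ^+ 2 ->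
  all (fun pq => let: (p, x) := pq in
                 [&& 0 <= p.1, p.1 + x <= 1, 0 <= p.2 & p.2 + x <= 1])
      (zip (shelf_aux 1 yb h u s) s).
Proof.
elim: s => [|x s IH] yb h u A m yb0 h0 hx1 x1h hu u1 m0 mh //= /andP[xm ps]
  /andP[x0 ps0] HA HT.
rewrite big_cons in HT.
have s0 : 0 <= \sum_(y <- s) y ^+ 2 by apply: sumr_ge0 => i _; apply: sqr_ge0.
have x2 : 0 <= x ^+ 2 by apply: sqr_ge0.
have Hm : 0 <= m * (u - h) by apply: mulr_ge0; lra.
have Hyb : yb + h <= 1.
  rewrite leNgt; apply/negP => Hc.
  have : 0 < (yb + h - 1) * (1 - x1) by apply: mulr_gt0; lra.
  lra.
case: ifP => Hux /=.
  apply/andP; split.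
    apply/and4P; split => //; lra.
  apply: (IH yb h (u + x) (A + x ^+ 2) x) => //; try lra.
  have : 0 <= (m - x) * (u - h) by apply: mulr_ge0; lra.
  lra.
have Hux' : 1 < u + x by rewrite ltNge Hux.
have HA' : (yb + h + x - x1) * (1 - x1) + x1 ^+ 2 + x * (x - x) <= A + x ^+ 2.
  have : 0 <= (m - x) * (u - h) by apply: mulr_ge0; lra.
  have : 0 <= x * (x + u - h - (1 - x1)) by apply: mulr_ge0; lra.
  lra.
have Hyb' : yb + h + x <= 1.
  rewrite leNgt; apply/negP => Hc.
  have : 0 < (yb + h + x - 1) * (1 - x1) by apply: mulr_gt0; lra.
  lra.
apply/andP; split.
  apply/and4P; split => //=; lra.
apply: (IH (yb + h) x x (A + x ^+ 2) x) => //; lra.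
Qed.

Theorem lemma4 (R : realFieldType) (x1 : R) (xs : seq R) :
  sorted (>=%R) (x1 :: xs) ->
  all (fun x => 0 < x) (x1 :: xs) ->
  x1 < 1 / 2 ->
  \sum_(x <- x1 :: xs) x ^+ 2 <= 1 / 2 + 2 * (x1 - 1 / 2) ^+ 2 ->
  shelf_packing_succeeds 1 1 (x1 :: xs).
Proof.
move=> /= ps /andP[x0 ps0] x1h HT.
rewrite big_cons in HT.
rewrite /shelf_packing_succeeds /shelf_positions /=.
apply/andP; split.
  apply/and4P; split => //; lra.
apply: (@aux R x1 xs 0 x1 x1 (x1 ^+ 2) x1) => //; lra.
Qed.
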